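(* Let $(\mathfrak g,\triangleright)$ be a post-Lie algebra and $\phi:\mathcal U(\overline{\mathfrak g})\to\mathcal U_\ast(\mathfrak g)$ the Hopf algebra isomorphism extending the identity of $V$. For all $n\ge1$ and $x_1,\dots,x_n\in\mathfrak g$, $$\phi(x_1.\,x_2.\,\cdots.\,x_n)=x_1\phi(x_2.\,\cdots.\,x_n)+x_1\triangleright\phi(x_2.\,\cdots.\,x_n)$$ (with $\phi(\mathbf 1)=\mathbf 1$), and consequently $$\phi(x_1.\,\cdots.\,x_n)=x_1\ast\cdots\ast x_n=\sum_{\pi\in P_n}X_\pi .$$ Here $P_n$ is the set of all set partitions of $\{1,\dots,n\}$; for $\pi=\{\pi_1,\dots,\pi_m\}$ the blocks are ordered so that $\max\pi_1<\max\pi_2<\dots<\max\pi_m$; for a block $\pi_i=\{k_1<k_2<\dots<k_l\}$ one sets $x(\pi_i):=x_{k_1}\triangleright(x_{k_2}\triangleright(\cdots\triangleright(x_{k_{l-1}}\triangleright x_{k_l})\cdots))\in\mathfrak g$; and $X_\pi:=x(\pi_1)x(\pi_2)\cdots x(\pi_m)$, the product taken in $\mathcal U(\mathfrak g)$.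
   Context: All vector spaces are finite dimensional over $\mathbb K=\mathbb R$ or $\mathbb C$. A (left) post-Lie algebra is a Lie algebra $\mathfrak g=(V,[\cdot,\cdot])$ with a bilinear product $\triangleright:V\otimes V\to V$ such that for all $x,y,z$: $x\triangleright[y,z]=[x\triangleright y,z]+[y,x\triangleright z]$ and $[x,y]\triangleright z=a_\triangleright(x,y,z)-a_\triangleright(y,x,z)$, where $a_\triangleright(x,y,z)=x\triangleright(y\triangleright z)-(x\triangleright y)\triangleright z$. The bracket $[[x,y]]:=x\triangleright y-y\triangleright x+[x,y]$ is a Lie bracket; $\overline{\mathfrak g}:=(V,[[\cdot,\cdot]])$, and the product of $\mathcal U(\overline{\mathfrak g})$ is written $A.\,B$. $\mathcal U(\mathfrak g)$ denotes the universal enveloping algebra with its usual cocommutative Hopf structure (product written as concatenation, unit $\mathbf 1$, elements of $\mathfrak g$ primitive, counit $\epsilon$); Sweedler notation $\Delta A=A_{(1)}\otimes A_{(2)}$. The post-Lie product extends uniquely to a bilinear product $\triangleright$ on $\mathcal U(\mathfrak g)$ such that, for $A,B,C\in\mathcal U(\mathfrak g)$, $x\in\mathfrak g$: $\mathbf 1\triangleright A=A$, $A\triangleright\mathbf 1=\epsilon(A)\mathbf 1$, $xA\triangleright B=x\triangleright(A\triangleright B)-(x\triangleright A)\triangleright B$, $A\triangleright BC=(A_{(1)}\triangleright B)(A_{(2)}\triangleright C)$. Define $A\ast B:=A_{(1)}(A_{(2)}\triangleright B)$; $\mathcal U_\ast(\mathfrak g):=(\mathcal U(\mathfrak g),\ast,\mathbf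 1,\Delta,\epsilon)$ is a Hopf algebra. It is known that the identity map $\overline{\mathfrak g}\to\mathfrak g$ extends uniquely to a Hopf algebra isomorphism $\phi:\mathcal U(\overline{\mathfrak g})\to\mathcal U_\ast(\mathfrak g)$ (in particular an algebra morphism, so $\phi(x_1.\,\cdots.\,x_n)=x_1\ast\cdots\ast x_n$). *)

(* Defs.v *)
From HB Require Import structures.
From mathcomp Require Import all_boot all_order all_algebra.
Set Implicit Arguments. Unset Strict Implicit. Unset Printing Implicit Defensive.
Import Order.TTheory GRing.Theory Num.Theory.
Local Open Scope ring_scope.

Section PostLieDefs.
Variable K : fieldType.

Definition is_linear (A B : lmodType K) (f : A -> B) : Prop :=
  forall (a : K) (u v : A), f (a *: u + v) = a *: f u + f v.

Definition is_bilinear (A B C : lmodType K) (f : A -> B -> C) : Prop :=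
  (forall (a : K) (u v : A) (w : B), f (a *: u + v) w = a *: f u w + f v w) /\
  (forall (a : K) (u : A) (v w : B), f u (a *: v + w) = a *: f u v + f u w).

Definition is_lie_bracket (V : lmodType K) (br : V -> V -> V) : Prop :=
  is_bilinear br /\ (forall x, br x x = 0) /\
  (forall x y z, br x (br y z) + br y (br z x) + br z (br x y) = 0).

Definition assoc_tri (V : lmodType K) (tri : V -> V -> V) (x y z : V) : V :=
  tri x (tri y z) - tri (tri x y) z.

Definition is_post_lie (V : lmodType K) (br tri : V -> V -> V) : Prop :=
  is_lie_bracket br /\ is_bilinear tri /\
  (forall x y z, tri x (br y z) = br (tri x y) z + br y (tri x z)) /\
  (forall x y z, tri (br x y) z = assoc_tri tri x y z - assoc_tri tri y x z).

Definition postlie_bracket (V : lmodType K) (br tri : V -> V -> V) (x y : V) : V :=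
  tri x y - tri y x + br x y.

Definition is_alg_morph (U A : algType K) (f : U -> A) : Prop :=
  is_linear f /\ f 1 = 1 /\ (forall u v, f (u * v) = f u * f v).

Definition is_enveloping (V : lmodType K) (br : V -> V -> V)
    (U : algType K) (iota : V -> U) : Prop :=
  is_linear iota /\
  (forall x y, iota (br x y) = iota x * iota y - iota y * iota x) /\
  (forall (A : algType K) (f : V -> A), is_linear f ->
     (forall x y, f (br x y) = f x * f y - f y * f x) ->
     exists F : U -> A, [/\ is_alg_morph F, (forall x, F (iota x) = f x) &
        forall G : U -> A, is_alg_morph G -> (forall x, G (iota x) = f x) ->
          forall u, G u = F u]).

(* Sweedler notation: cop A is a list of pairs (A_(1), A_(2)) representing
   Delta A = \sum A_(1) (x) A_(2); sums over it are only used against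
   bilinear maps, hence are well defined in U (x) U. *)
Definition sweedler (U : algType K) (cop : U -> seq (U * U))
    (f : U -> U -> U) (A : U) : U :=
  \sum_(p <- cop A) f p.1 p.2.

(* cop represents the usual coproduct of U(g): the algebra morphism
   U -> U (x) U with Delta(x) = x (x) 1 + 1 (x) x for x in g. *)
Definition is_coproduct (V : lmodType K) (U : algType K) (iota : V -> U)
    (cop : U -> seq (U * U)) : Prop :=
  forall f : U -> U -> U, is_bilinear f ->
  [/\ (forall (a : K) (A B : U),
          sweedler cop f (a *: A + B) = a *: sweedler cop f A + sweedler cop f B),
      sweedler cop f 1 = f 1 1,
      (forall x, sweedler cop f (iota x) = f (iota x) 1 + f 1 (iota x)) &
      (forall A B, sweedler cop f (A * B) =
         \sum_(p <- cop A) \sum_(q <- cop B) f (p.1 * q.1) (p.2 * q.2))].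

Definition is_counit (V : lmodType K) (U : algType K) (iota : V -> U)
    (eps : U -> K) : Prop :=
  [/\ forall (a : K) (A B : U), eps (a *: A + B) = a * eps A + eps B,
      eps 1 = 1, (forall A B, eps (A * B) = eps A * eps B) &
      forall x, eps (iota x) = 0].

Definition is_postlie_extension (V : lmodType K) (tri : V -> V -> V)
    (U : algType K) (iota : V -> U) (cop : U -> seq (U * U)) (eps : U -> K)
    (trU : U -> U -> U) : Prop :=
  is_bilinear trU /\
  (forall x y, trU (iota x) (iota y) = iota (tri x y)) /\
  (forall A, trU 1 A = A) /\
  (forall A, trU A 1 = eps A *: 1) /\
  (forall x A B, trU (iota x * A) B = trU (iota x) (trU A B) - trU (trU (iota x) A) B) /\
  (forall A B C, trU A (B * C) = \sum_(p <- cop A) trU p.1 B * trU p.2 C).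

Definition star (U : algType K) (cop : U -> seq (U * U)) (trU : U -> U -> U)
    (A B : U) : U :=
  \sum_(p <- cop A) p.1 * trU p.2 B.

Fixpoint star_word (U : algType K) (cop : U -> seq (U * U)) (trU : U -> U -> U)
    (s : seq U) : U :=
  match s with
  | [::] => 1
  | [:: a] => a
  | a :: s' => star cop trU a (star_word cop trU s')
  end.

(* phi : U(gbar) -> U_*(g) is the algebra morphism extending the identity of V
   (it is unique by the universal property of U(gbar)). *)
Definition is_phi (V : lmodType K) (U Ub : algType K) (iota : V -> U)
    (iotab : V -> Ub) (cop : U -> seq (U * U)) (trU : U -> U -> U)
    (phi : Ub -> U) : Prop :=
  [/\ is_linear phi, phi 1 = 1,
      (forall A B, phi (A * B) = star cop trU (phi A) (phi B)) &
      forall x, phi (iotab x) = iota x].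

Fixpoint tri_word (V : lmodType K) (tri : V -> V -> V) (s : seq V) : V :=
  match s with
  | [::] => 0
  | [:: v] => v
  | v :: s' => tri v (tri_word tri s')
  end.

Section Partitions.
Variable n : nat.

Definition block_max (B : {set 'I_n}) : nat := \max_(i in B) (nat_of_ord i).

Definition block_elems (B : {set 'I_n}) : seq 'I_n :=
  sort (fun i j : 'I_n => (i <= j)%N) (enum B).

Definition ordered_blocks (P : {set {set 'I_n}}) : seq {set 'I_n} :=
  sort (fun B C => (block_max B <= block_max C)%N) (enum P).

Definition x_block (V : lmodType K) (tri : V -> V -> V) (x : 'I_n -> V)
    (B : {set 'I_n}) : V :=
  tri_word tri [seq x i | i <- block_elems B].

Definition X_part (V : lmodType K) (tri : V -> V -> V) (U : algType K)
    (iota : V -> U) (x : 'I_n -> V) (P : {set {set 'I_n}}) : U :=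
  \prod_(B <- ordered_blocks P) iota (x_block tri x B).

End Partitions.
End PostLieDefs.

(* Main.v *)
Require Import Defs.
From HB Require Import structures.
From mathcomp Require Import all_boot all_order all_algebra.
Import GRing.Theory.
Set Implicit Arguments. Unset Strict Implicit. Unset Printing Implicit Defensive.

Lemma partP (T : finType) (P : {set {set T}}) :
  partition P [set: T] <->
  [/\ set0 \notin P, (forall i, exists2 B, B \in P & i \in B) &
      (forall A B i, A \in P -> B \in P -> i \in A -> i \in B -> A = B)].
Proof.
rewrite /partition; split.
  case/and3P=> /eqP cov /trivIsetP tI n0; split => //.
    move=> i; have : i \in cover P by rewrite cov inE.
    by case/bigcupP=> B BP iB; exists B.
  move=> A B i AP BP iA iB; apply/eqP; apply: contraT => nAB.
  have := tI A B AP BP nAB; rewrite -setI_eq0 => /eqP/setP/(_ i).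
  by rewrite !inE iA iB.
case=> n0 cov uni; apply/and3P; split => //.
  apply/eqP/setP=> i; rewrite inE; apply/bigcupP.
  by have [B BP iB] := cov i; exists B.
apply/trivIsetP=> A B AP BP nAB; rewrite -setI_eq0; apply/eqP/setP=> i.
rewrite !inE; apply/negbTE/andP=> -[iA iB].
by move: nAB; rewrite (uni A B i AP BP iA iB) eqxx.
Qed.

Lemma setD1_id (T : finType) (A : {set T}) x : x \notin A -> A :\ x = A.
Proof. by move=> nx; apply/setP=> y; rewrite !inE; case: eqP => // ->; rewrite (negbTE nx). Qed.

Section Lift.
Variable n : nat.
Local Notation L := (@lift n.+1 ord0).
Definition liftB (B : {set 'I_n}) : {set 'I_n.+1} := [set L j | j in B].
Definition preB (A : {set 'I_n.+1}) : {set 'I_n} := L @^-1: A.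

Lemma ord0_liftB (B : {set 'I_n}) : (ord0 \in liftB B) = false.
Proof. by apply/negbTE/imsetP=> -[j _ /eqP]; rewrite (negbTE (neq_lift _ _)). Qed.

Lemma in_liftB (B : {set 'I_n}) j : (L j \in liftB B) = (j \in B).
Proof. by rewrite mem_imset //; apply: lift_inj. Qed.

Lemma preB_liftB (B : {set 'I_n}) : preB (liftB B) = B.
Proof. by apply/setP=> j; rewrite inE in_liftB. Qed.

Lemma preB_U0 (B : {set 'I_n}) : preB (ord0 |: liftB B) = B.
Proof.
apply/setP=> j; rewrite !inE in_liftB.
by rewrite eq_sym (negbTE (neq_lift _ _)).
Qed.

Lemma preB_0 : preB [set ord0] = set0.
Proof. by apply/setP=> j; rewrite !inE eq_sym (negbTE (neq_lift _ _)). Qed.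

Lemma liftB_preB (A : {set 'I_n.+1}) : ord0 \notin A -> liftB (preB A) = A.
Proof.
move=> nA; apply/setP=> i; case: (unliftP ord0 i) => [j ->|->].
  by rewrite in_liftB inE.
by rewrite ord0_liftB (negbTE nA).
Qed.

Lemma liftB_preB0 (A : {set 'I_n.+1}) : ord0 \in A -> ord0 |: liftB (preB A) = A.
Proof.
move=> nA; apply/setP=> i; rewrite inE; case: (unliftP ord0 i) => [j ->|->].
  by rewrite in_liftB !inE eq_sym (negbTE (neq_lift _ _)).
by rewrite !inE eqxx nA.
Qed.

Lemma liftB_eq0 (B : {set 'I_n}) : (liftB B == set0) = (B == set0).
Proof. exact: imset_eq0. Qed.

Lemma liftB_inj : injective liftB.
Proof. by move=> A B e; rewrite -(preB_liftB A) e preB_liftB. Qed.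

Lemma liftB0 : liftB set0 = set0.
Proof. exact: imset0. Qed.

Lemma set1_ord0_neq0 : ([set ord0] : {set 'I_n.+1}) != set0.
Proof. by apply/eqP=> /setP/(_ ord0); rewrite !inE eqxx. Qed.

Lemma preB_neq0 (A : {set 'I_n.+1}) :
  A != set0 -> A != [set ord0] -> preB A != set0.
Proof.
move=> An0 A1; apply/negP=> /eqP e.
case: (boolP (ord0 \in A)) => oA.
  by move: A1; rewrite -(liftB_preB0 oA) e liftB0 setU0 eqxx.
by move: An0; rewrite -(liftB_preB oA) e liftB0 eqxx.
Qed.

Definition gB (b B : {set 'I_n}) : {set 'I_n.+1} :=
  if B == b then ord0 |: liftB B else liftB B.

Lemma preB_gB b B : preB (gB b B) = B.
Proof. by rewrite /gB; case: eqP => _; rewrite ?preB_U0 ?preB_liftB. Qed.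

Lemma in_gB_L b B j : (L j \in gB b B) = (j \in B).
Proof.
rewrite /gB; case: eqP => _; rewrite ?in_liftB // !inE in_liftB.
by rewrite eq_sym (negbTE (neq_lift _ _)).
Qed.

Lemma in_gB_0 b B : (ord0 \in gB b B) = (B == b).
Proof. by rewrite /gB; case: eqP => _; rewrite ?ord0_liftB // !inE eqxx. Qed.

Definition ins (j : {set {set 'I_n}} * option {set 'I_n}) : {set {set 'I_n.+1}} :=
  match j.2 with
  | None => [set ord0] |: [set liftB B | B in j.1]
  | Some b => [set gB b B | B in j.1]
  end.

Definition restr (P : {set {set 'I_n.+1}}) : {set {set 'I_n}} :=
  [set preB A | A in P] :\ set0.

Definition tag (P : {set {set 'I_n.+1}}) : option {set 'I_n} :=
  if [set ord0] \in P then None else Some (preB (pblock P ord0)).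

Definition hh (P : {set {set 'I_n.+1}}) := (restr P, tag P).

Definition okj (j : {set {set 'I_n}} * option {set 'I_n}) : bool :=
  partition j.1 [set: 'I_n] && (if j.2 is Some b then b \in j.1 else true).

Lemma ins_part j : okj j -> partition (ins j) [set: 'I_n.+1].
Proof.
case: j => P [b|] /andP [/partP [n0 cov uni]] /=; rewrite /ins /=.
  move=> bP; apply/partP; split.
  - apply/imsetP=> -[B BP e]; move: (preB_gB b B); rewrite -e.
    rewrite /preB preimset0 => B0; by move: n0; rewrite B0 BP.
  - move=> i; case: (unliftP ord0 i) => [j ->|->].
      have [B BP jB] := cov j; exists (gB b B); first exact: imset_f.
      by rewrite in_gB_L.
    by exists (gB b b); [exact: imset_f | rewrite in_gB_0].
  - move=> A C i /imsetP [B BP ->] /imsetP [B' B'P ->].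
    case: (unliftP ord0 i) => [j ->|->].
      by rewrite !in_gB_L => jB jB'; rewrite (uni B B' j).
    by rewrite !in_gB_0 => /eqP -> /eqP ->.
move=> _; apply/partP; split.
- rewrite !inE negb_or eq_sym set1_ord0_neq0 /=.
  apply/imsetP=> -[B BP /eqP]; rewrite eq_sym liftB_eq0 => /eqP B0.
  by move: n0; rewrite -B0 BP.
- move=> i; case: (unliftP ord0 i) => [j ->|->].
    have [B BP jB] := cov j; exists (liftB B).
      by apply/setU1P; right; exact: imset_f.
    by rewrite in_liftB.
  by exists [set ord0]; rewrite !inE ?eqxx.
- move=> A C i /setU1P [->|/imsetP [B BP ->]] /setU1P [->|/imsetP [B' B'P ->]] //.
  + by move=> /set1P ->; rewrite ord0_liftB.
  + by move=> iB /set1P e; move: iB; rewrite e ord0_liftB.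
  case: (unliftP ord0 i) => [j ->|->]; last by rewrite ord0_liftB.
  by rewrite !in_liftB => jB jB'; rewrite (uni B B' j).
Qed.

Lemma hh_ins j : okj j -> hh (ins j) = j.
Proof.
move=> ok; have pI := ins_part ok.
case: j ok pI => P [b|] /andP [/partP [n0 cov uni]] /= bP pI; rewrite /hh /restr /tag /ins /=.
  have -> : [set preB A | A in [set gB b B | B in P]] = P.
    by rewrite -imset_comp (eq_imset _ (preB_gB b)) imset_id.
  have -> : [set ord0] \in [set gB b B | B in P] = false.
    apply/negbTE/imsetP=> -[B BP e]; move: (preB_gB b B); rewrite -e preB_0.
    by move=> B0; move: n0; rewrite B0 BP.
  rewrite setD1_id //=.
  rewrite (@def_pblock _ _ (gB b b)); first by rewrite preB_gB.
  - by case/and3P: pI.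
  - by move: pI; rewrite /ins /= => _; exact: imset_f.
  - by rewrite in_gB_0.
rewrite setU11 imsetU1 -imset_comp (eq_imset _ (@preB_liftB)) imset_id preB_0.
by rewrite setU1K.
Qed.

Lemma ok_hh P : partition P [set: 'I_n.+1] -> okj (hh P).
Proof.
move=> pP; have /partP [n0 cov uni] := pP.
apply/andP; split.
  apply/partP; split; rewrite /hh /restr /=.
  - by rewrite !inE eqxx.
  - move=> j; have [C CP jC] := cov (L j); exists (preB C); last by rewrite inE.
    rewrite !inE imset_f // andbT; apply/set0Pn; exists j; by rewrite inE.
  - move=> A B j /setD1P [_ /imsetP [C CP ->]] /setD1P [_ /imsetP [C' C'P ->]].
    by rewrite !inE => jC jC'; rewrite (uni C C' (L j)).
rewrite /hh /tag /=; case: ifP => // h1.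
have covP : ord0 \in cover P by case/and3P: pP => /eqP -> _ _; rewrite inE.
rewrite /restr !inE imset_f ?pblock_mem // andbT.
apply: preB_neq0.
  by apply/set0Pn; exists ord0; rewrite mem_pblock.
by apply/negP=> /eqP e; move: (pblock_mem covP); rewrite e h1.
Qed.

Lemma ins_hh P : partition P [set: 'I_n.+1] -> ins (hh P) = P.
Proof.
move=> pP; have /partP [n0 cov uni] := pP.
rewrite /hh /ins /tag /restr /=; case: ifP => h1.
  apply/setP=> A; apply/idP/idP.
    case/setU1P=> [-> //|/imsetP [B /setD1P [Bn0 /imsetP [C CP eB]] ->]]; subst B.
    have oC : ord0 \notin C.
      apply/negP=> oC; move: Bn0; rewrite (uni C [set ord0] ord0) // ?inE //.
      by rewrite preB_0 eqxx.
    by rewrite liftB_preB.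
  move=> AP; apply/setU1P; case: (eqVneq A [set ord0]) => [->|A1]; first by left.
  right; have oA : ord0 \notin A.
    by apply/negP=> oA; move: A1; rewrite (uni A [set ord0] ord0) // ?inE ?eqxx.
  apply/imsetP; exists (preB A); last by rewrite liftB_preB.
  rewrite !inE imset_f // andbT; apply: preB_neq0 => //.
  by apply: contraNneq n0 => <-.
have covP : ord0 \in cover P by case/and3P: pP => /eqP -> _ _; rewrite inE.
set b0 := pblock P ord0.
have b0P : b0 \in P by exact: pblock_mem.
have ob0 : ord0 \in b0 by rewrite mem_pblock.
have pb0 : preB b0 != set0.
  apply: preB_neq0; first by apply/set0Pn; exists ord0.
  by apply/negP=> /eqP e; move: b0P; rewrite e h1.
have key : forall C, C \in P -> gB (preB b0) (preB C) = C.
  move=> C CP; rewrite /gB; case: eqP => e.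
    have -> : C = b0.
      have [j jb] := set0Pn _ pb0; have jC : j \in preB C by rewrite e.
      rewrite !inE in jb jC; exact: (uni C b0 (L j)).
    by rewrite liftB_preB0.
  apply: liftB_preB; apply/negP=> oC; apply: e.
  by rewrite (uni C b0 ord0).
apply/setP=> A; apply/idP/idP.
  by case/imsetP=> B /setD1P [_ /imsetP [C CP eB]] ->; subst B; rewrite key.
move=> AP; apply/imsetP; exists (preB A); last by rewrite key.
rewrite !inE imset_f // andbT; apply: preB_neq0.
  by apply: contraNneq n0 => <-.
by apply/negP=> /eqP e; move: AP; rewrite e h1.
Qed.

End Lift.

Lemma map_mem_imset (T1 T2 : finType) (f : T1 -> T2) (s : seq T1) (A : {set T1}) :
  s =i A -> map f s =i f @: A.
Proof.
move=> sA y; apply/mapP/imsetP=> -[z zs ->]; exists z => //; by rewrite ?sA // -sA.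
Qed.

Lemma be_char m (B : {set 'I_m}) s : uniq s -> s =i B ->
  sorted (fun i j : 'I_m => (i <= j)%N) s -> block_elems B = s.
Proof.
move=> us sB ss; rewrite /block_elems; apply: (@sorted_eq _ (fun i j : 'I_m => (i <= j)%N)) => //.
- by move=> a b c h1 h2; exact: leq_trans h1 h2.
- by move=> a b /anti_leq /val_inj ->.
- by apply: sort_sorted => a b; apply: leq_total.
rewrite perm_sort; apply: uniq_perm => //; first exact: enum_uniq.
by move=> i; rewrite mem_enum sB.
Qed.

Lemma block_max_mem m (B : {set 'I_m}) : B != set0 ->
  exists2 i, i \in B & nat_of_ord i = block_max B.
Proof.
move=> Bn0; have : (0 < #|B|)%N by rewrite card_gt0.
by case/(eq_bigmax_cond (fun i : 'I_m => nat_of_ord i)) => i iB e; exists i; rewrite // /block_max e.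
Qed.

Lemma ob_char m (P : {set {set 'I_m}}) s : partition P [set: 'I_m] ->
  uniq s -> s =i P -> sorted (fun B C => (block_max B <= block_max C)%N) s ->
  ordered_blocks P = s.
Proof.
move=> /partP [n0 cov uni] us sP ss; rewrite /ordered_blocks.
apply: (@sorted_eq_in _ (fun B C : {set 'I_m} => (block_max B <= block_max C)%N)) => //.
- by move=> a b c _ _ _ h1 h2; exact: leq_trans h1 h2.
- move=> A B; rewrite !mem_sort !mem_enum => AP BP /anti_leq e.
  have nz : forall A, A \in P -> A != set0 by move=> A' A'P; apply: contraNneq n0 => <-.
  have [i iA ei] := block_max_mem (nz _ AP).
  have [j jB ej] := block_max_mem (nz _ BP).
  have ij : i = j by apply: val_inj; rewrite /= ei ej e.
  by apply: (uni A B i) => //; rewrite ij.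
- by apply: sort_sorted => a b; apply: leq_total.
rewrite perm_sort; apply: uniq_perm => //; first exact: enum_uniq.
by move=> i; rewrite mem_enum sP.
Qed.

Section Lift2.
Variable n : nat.
Local Notation L := (@lift n.+1 ord0).

Lemma bmax_liftB (B : {set 'I_n}) : B != set0 -> block_max (liftB B) = (block_max B).+1.
Proof.
move=> Bn0; rewrite /block_max /liftB big_imset; last by move=> i j _ _; apply: lift_inj.
rewrite (eq_bigr (fun j : 'I_n => (nat_of_ord j).+1)); last by move=> j _; rewrite lift0.
have [i iB ei] := block_max_mem Bn0; rewrite /block_max in ei.
apply/anti_leq/andP; split.
  apply/bigmax_leqP => j jB; rewrite ltnS.
  by apply: leq_bigmax_cond.
rewrite -ei.
by apply: (leq_bigmax_cond (F := fun j : 'I_n => (nat_of_ord j).+1)).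
Qed.

Lemma bmax_U0 (A : {set 'I_n.+1}) : block_max (ord0 |: A) = block_max A.
Proof.
rewrite /block_max; apply/anti_leq/andP; split.
  apply/bigmax_leqP => i; rewrite !inE => /orP [/eqP -> //|iA].
  by apply: leq_bigmax_cond.
apply/bigmax_leqP => i iA.
by apply: leq_bigmax_cond; rewrite !inE iA orbT.
Qed.

Lemma bmax_gB b (B : {set 'I_n}) : B != set0 -> block_max (gB b B) = (block_max B).+1.
Proof. by move=> Bn0; rewrite /gB; case: eqP => _; rewrite ?bmax_U0 bmax_liftB. Qed.

Lemma bmax_1 : block_max [set (@ord0 n)] = 0%N.
Proof. by rewrite /block_max big_set1. Qed.

Lemma ob_ins_None (P : {set {set 'I_n}}) : partition P [set: 'I_n] ->
  ordered_blocks (ins (P, None)) = [set ord0] :: map (@liftB n) (ordered_blocks P).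
Proof.
move=> pP; have /partP [n0 _ _] := pP.
have nz : forall A, A \in P -> A != set0 by move=> A' A'P; apply: contraNneq n0 => <-.
have obP : ordered_blocks P =i P by move=> A; rewrite mem_sort mem_enum.
apply: ob_char.
- by apply: ins_part; rewrite /okj /= pP.
- rewrite /= map_inj_uniq ?sort_uniq ?enum_uniq; last exact: liftB_inj.
  rewrite andbT; apply/mapP=> -[B _ /setP /(_ ord0)]; by rewrite ord0_liftB !inE eqxx.
- move=> A; rewrite /ins /= !inE (map_mem_imset _ obP) //.
- rewrite /= path_sortedE; last by move=> a b c h1 h2; exact: leq_trans h1 h2.
  apply/andP; split; first by apply/allP=> B _ /=; rewrite bmax_1.
  rewrite sorted_map; apply: (@sub_in_sorted _ (mem P) (fun B C => (block_max B <= block_max C)%N)).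
  + by move=> B C BP CP /=; rewrite !bmax_liftB ?nz.
  + by apply/allP=> B; rewrite obP.
  by apply: sort_sorted => a b; apply: leq_total.
Qed.

Lemma ob_ins_Some (P : {set {set 'I_n}}) b : partition P [set: 'I_n] -> b \in P ->
  ordered_blocks (ins (P, Some b)) = map (gB b) (ordered_blocks P).
Proof.
move=> pP bP; have /partP [n0 _ _] := pP.
have nz : forall A, A \in P -> A != set0 by move=> A' A'P; apply: contraNneq n0 => <-.
have obP : ordered_blocks P =i P by move=> A; rewrite mem_sort mem_enum.
apply: ob_char.
- by apply: ins_part; rewrite /okj /= pP.
- rewrite map_inj_uniq ?sort_uniq ?enum_uniq //.
  by move=> B C e; rewrite -(preB_gB b B) e preB_gB.
- move=> A; rewrite /ins /= (map_mem_imset _ obP) //.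
- rewrite sorted_map; apply: (@sub_in_sorted _ (mem P) (fun B C => (block_max B <= block_max C)%N)).
  + by move=> B C BP CP /=; rewrite !bmax_gB ?nz.
  + by apply/allP=> B; rewrite obP.
  by apply: sort_sorted => a b'; apply: leq_total.
Qed.

Lemma be_liftB (B : {set 'I_n}) : block_elems (liftB B) = map L (block_elems B).
Proof.
have beB : block_elems B =i B by move=> i; rewrite mem_sort mem_enum.
apply: be_char.
- by rewrite map_inj_uniq ?sort_uniq ?enum_uniq //; apply: lift_inj.
- exact: map_mem_imset.
rewrite sorted_map; apply: (@sub_sorted _ (fun i j : 'I_n => (i <= j)%N)).
  by move=> i j h; change (L i <= L j)%N; rewrite !lift0.
by rewrite /block_elems; apply: sort_sorted => a b; apply: leq_total.
Qed.

Lemma be_U0 (B : {set 'I_n}) : block_elems (ord0 |: liftB B) = ord0 :: map L (block_elems B).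
Proof.
have beB : block_elems B =i B by move=> i; rewrite mem_sort mem_enum.
apply: be_char.
- rewrite /= map_inj_uniq ?sort_uniq ?enum_uniq ?andbT; last exact: lift_inj.
  by apply/mapP=> -[j _ /eqP]; rewrite (negbTE (neq_lift _ _)).
- by move=> i; rewrite inE (map_mem_imset _ beB) !inE.
rewrite /= path_sortedE; last by move=> a b c h1 h2; exact: leq_trans h1 h2.
apply/andP; split; first by apply/allP.
rewrite sorted_map; apply: (@sub_sorted _ (fun i j : 'I_n => (i <= j)%N)).
  by move=> i j h; change (L i <= L j)%N; rewrite !lift0.
by rewrite /block_elems; apply: sort_sorted => a b; apply: leq_total.
Qed.
End Lift2.

Section XPart.
Local Open Scope ring_scope.
Variable K : fieldType.
Variable V : lmodType K.
Variable tri : V -> V -> V.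
Variable U : algType K.
Variable iota : V -> U.
Variable n : nat.
Local Notation L := (@lift n.+1 ord0).
Variable x : 'I_n.+1 -> V.
Local Notation x' := (fun j : 'I_n => x (L j)).

Lemma xb_liftB (B : {set 'I_n}) : x_block tri x (liftB B) = x_block tri x' B.
Proof. by rewrite /x_block be_liftB -map_comp. Qed.

Lemma xb_U0 (B : {set 'I_n}) : B != set0 ->
  x_block tri x (ord0 |: liftB B) = tri (x ord0) (x_block tri x' B).
Proof.
move=> Bn0; rewrite /x_block be_U0 /= -map_comp.
case e: (block_elems B) => [|i s] //.
have [i iB] := set0Pn _ Bn0.
by move: iB; rewrite -mem_enum -(mem_sort (fun i j : 'I_n => (i <= j)%N)) -/(block_elems B) e.
Qed.

Lemma xb_1 : x_block tri x [set ord0] = x ord0.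
Proof.
rewrite /x_block (@be_char _ _ [:: ord0]) //.
by move=> i; rewrite !inE.
Qed.

Lemma X_ins_None (P : {set {set 'I_n}}) : partition P [set: 'I_n] ->
  X_part tri iota x (ins (P, None)) = iota (x ord0) * X_part tri iota x' P.
Proof.
move=> pP; rewrite /X_part ob_ins_None // big_cons big_map xb_1; congr (_ * _).
by apply: eq_bigr => B _; rewrite xb_liftB.
Qed.

Lemma X_ins_Some (P : {set {set 'I_n}}) b : partition P [set: 'I_n] -> b \in P ->
  X_part tri iota x (ins (P, Some b)) =
  \prod_(B <- ordered_blocks P)
     iota (if B == b then tri (x ord0) (x_block tri x' B) else x_block tri x' B).
Proof.
move=> pP bP; have /partP [n0 _ _] := pP.
rewrite /X_part ob_ins_Some // big_map big_seq [RHS]big_seq.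
apply: eq_bigr => B; rewrite mem_sort mem_enum => BP; rewrite /gB.
case: eqP => _; rewrite ?xb_liftB // xb_U0 //.
by apply: contraNneq n0 => <-.
Qed.
End XPart.

Section SumPart.
Local Open Scope ring_scope.
Variable K : fieldType.
Variable V : lmodType K.
Variable tri : V -> V -> V.
Variable U : algType K.
Variable iota : V -> U.
Variable n : nat.
Local Notation L := (@lift n.+1 ord0).
Variable x : 'I_n.+1 -> V.
Local Notation x' := (fun j : 'I_n => x (L j)).

Lemma sum_part :
  \sum_(P : {set {set 'I_n.+1}} | partition P [set: 'I_n.+1]) X_part tri iota x P =
  iota (x ord0) * (\sum_(P : {set {set 'I_n}} | partition P [set: 'I_n]) X_part tri iota x' P) +
  \sum_(P : {set {set 'I_n}} | partition P [set: 'I_n]) \sum_(b in P)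
     \prod_(B <- ordered_blocks P)
        iota (if B == b then tri (x ord0) (x_block tri x' B) else x_block tri x' B).
Proof.
rewrite (reindex_onto (@ins n) (@hh n)); last by move=> P pP; exact: ins_hh.
rewrite (eq_bigl (@okj n)); last first.
  move=> j; apply/andP/idP=> [[pI /eqP e]|ok]; first by rewrite -e; exact: ok_hh.
  by split; [exact: ins_part | rewrite hh_ins].
pose G (P : {set {set 'I_n}}) (o : option {set 'I_n}) := X_part tri iota x (ins (P, o)).
rewrite (eq_bigr (fun p => G p.1 p.2)); last by case.
rewrite -(@pair_big_dep _ _ _ _ _ (fun P => partition P [set: 'I_n])
           (fun P (o : option {set 'I_n}) => if o is Some b then b \in P else true)).
rewrite mulr_sumr -big_split /=; apply: eq_bigr => P pP.
rewrite (bigD1 None) //=; congr (_ + _); first by rewrite /G X_ins_None.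
rewrite (reindex_onto Some (fun o => odflt set0 o)); last by move=> [b|] //=.
apply: eq_big => [b|b]; first by rewrite /= eqxx !andbT.
by case/andP=> /andP [bP _] _; rewrite /G X_ins_Some.
Qed.
End SumPart.

Section Alg.
Local Open Scope ring_scope.
Variable K : fieldType.
Variable V : lmodType K.
Variable tri : V -> V -> V.
Variable U : algType K.
Variable iota : V -> U.
Variable cop : U -> seq (U * U).
Variable eps : U -> K.
Variable trU : U -> U -> U.
Hypothesis Hcop : is_coproduct iota cop.
Hypothesis Heps : is_counit iota eps.
Hypothesis HtrU : is_postlie_extension tri iota cop eps trU.

Lemma trU_add u : {morph trU u : a b / a + b}.
Proof.
move=> a b; case: HtrU => [[_ H2] _].
by have := H2 1 u a b; rewrite !scale1r.
Qed.

Lemma trU_0 u : trU u 0 = 0.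
Proof.
have h := trU_add u 0 0; rewrite addr0 in h.
by apply: (addrI (trU u 0)); rewrite addr0 -h.
Qed.

Lemma trU_sum u I (r : seq I) (P : pred I) (F : I -> U) :
  trU u (\sum_(i <- r | P i) F i) = \sum_(i <- r | P i) trU u (F i).
Proof. exact: (big_morph _ (trU_add u) (trU_0 u)). Qed.

Lemma D_mul a A B : trU (iota a) (A * B) = trU (iota a) A * B + A * trU (iota a) B.
Proof.
case: HtrU => [[H1 H2] [Hv [H1A [HA1 [Hx Hm]]]]].
rewrite Hm.
have bil : is_bilinear (fun u v => trU u A * trU v B).
  split.
    by move=> c u v w; rewrite H1 mulrDl scalerAl.
  by move=> c u v w; rewrite H1 mulrDr scalerAr.
have [_ _ Hi _] := Hcop bil.
have := Hi a; rewrite /sweedler => ->.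
by rewrite !H1A.
Qed.

Lemma star_iota a B : star cop trU (iota a) B = iota a * B + trU (iota a) B.
Proof.
case: HtrU => [[H1 H2] [Hv [H1A [HA1 [Hx Hm]]]]].
have bil : is_bilinear (fun u v => u * trU v B).
  split.
    by move=> c u v w; rewrite mulrDl scalerAl.
  by move=> c u v w; rewrite H1 mulrDr scalerAr.
have [_ _ Hi _] := Hcop bil.
rewrite /star; have := Hi a; rewrite /sweedler => ->.
by rewrite H1A mul1r.
Qed.

Lemma D_1 a : trU (iota a) 1 = 0.
Proof.
case: HtrU => [_ [_ [_ [HA1 _]]]]; case: Heps => _ _ _ He.
by rewrite HA1 He scale0r.
Qed.

Lemma D_iota a v : trU (iota a) (iota v) = iota (tri a v).
Proof. by case: HtrU => [_ [Hv _]]. Qed.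

Lemma D_prod a (T : eqType) (s : seq T) (g : T -> V) : uniq s ->
  trU (iota a) (\prod_(B <- s) iota (g B)) =
  \sum_(b <- s) \prod_(B <- s) iota (if B == b then tri a (g B) else g B).
Proof.
elim: s => [|c s IH] /=; first by rewrite !big_nil D_1.
case/andP=> cs us; rewrite big_cons D_mul D_iota IH // big_cons big_cons eqxx.
congr (_ + _).
  congr (_ * _); apply: eq_big_seq => B Bs.
  by case: eqP => // e; move: cs; rewrite -e Bs.
rewrite mulr_sumr; apply: eq_big_seq => b bs; rewrite big_cons.
by case: eqP => // e; move: cs; rewrite e bs.
Qed.
End Alg.

Section Main.
Local Open Scope ring_scope.
Variable K : fieldType.
Variable V : lmodType K.
Variable tri : V -> V -> V.
Variable U Ub : algType K.
Variable iota : V -> U.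
Variable iotab : V -> Ub.
Variable cop : U -> seq (U * U).
Variable eps : U -> K.
Variable trU : U -> U -> U.
Variable phi : Ub -> U.
Hypothesis Hcop : is_coproduct iota cop.
Hypothesis Heps : is_counit iota eps.
Hypothesis HtrU : is_postlie_extension tri iota cop eps trU.
Hypothesis Hphi : is_phi iota iotab cop trU phi.

Lemma phi_step n (x : 'I_n.+1 -> V) :
  phi (\prod_(i < n.+1) iotab (x i)) =
  iota (x ord0) * phi (\prod_(i < n) iotab (x (lift ord0 i)))
  + trU (iota (x ord0)) (phi (\prod_(i < n) iotab (x (lift ord0 i)))).
Proof.
case: Hphi => _ _ Hm Hi.
by rewrite big_ord_recl Hm Hi (star_iota Hcop HtrU).
Qed.

Lemma part_I0 (P : {set {set 'I_0}}) : partition P [set: 'I_0] = (P == set0).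
Proof.
apply/idP/idP.
  move/partP=> [n0 _ _]; apply/eqP/setP=> B; rewrite inE.
  have -> : B = set0 by apply/setP=> -[].
  by apply/negbTE.
move/eqP->; apply/partP; split; first by rewrite inE.
  by move=> -[].
by move=> A B i; rewrite inE.
Qed.

Lemma phi_part n (x : 'I_n -> V) :
  phi (\prod_(i < n) iotab (x i)) =
  \sum_(P : {set {set 'I_n}} | partition P [set: 'I_n]) X_part tri iota x P.
Proof.
elim: n x => [|n IH] x.
  case: Hphi => _ H1 _ _; rewrite big_ord0 H1.
  rewrite (eq_bigl (pred1 set0)); last by move=> P; rewrite part_I0.
  by rewrite big_pred1_eq /X_part /ordered_blocks enum_set0 big_nil.
rewrite phi_step IH sum_part; congr (_ + _).
rewrite (trU_sum HtrU); apply: eq_bigr => P pP.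
rewrite /X_part (D_prod Hcop Heps HtrU); last by rewrite sort_uniq enum_uniq.
rewrite -big_enum; apply: perm_big; by rewrite perm_sort.
Qed.

Lemma phi_star n (x : 'I_n.+1 -> V) :
  phi (\prod_(i < n.+1) iotab (x i)) = star_word cop trU [seq iota (x i) | i <- enum 'I_n.+1].
Proof.
case: Hphi => _ _ Hm Hi.
elim: n x => [|n IH] x.
  by rewrite big_ord_recl big_ord0 mulr1 Hi enum_ordSl enum_ord0.
rewrite big_ord_recl Hm Hi IH.
rewrite [enum 'I_n.+2]enum_ordSl /= -map_comp [enum 'I_n.+1]enum_ordSl /=.
done.
Qed.
End Main.

Local Open Scope ring_scope.

Theorem mainTheorem2
  (K : fieldType) (V : vectType K) (br tri : V -> V -> V)
  (Hpl : is_post_lie br tri)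
  (U : algType K) (iota : V -> U) (HU : is_enveloping br iota)
  (Ub : algType K) (iotab : V -> Ub)
  (HUb : is_enveloping (postlie_bracket br tri) iotab)
  (cop : U -> seq (U * U)) (Hcop : is_coproduct iota cop)
  (eps : U -> K) (Heps : is_counit iota eps)
  (trU : U -> U -> U) (HtrU : is_postlie_extension tri iota cop eps trU)
  (phi : Ub -> U) (Hphi : is_phi iota iotab cop trU phi)
  (n : nat) (x : 'I_n.+1 -> V) :
  [/\ phi (\prod_(i < n.+1) iotab (x i)) =
        iota (x ord0) * phi (\prod_(i < n) iotab (x (lift ord0 i)))
        + trU (iota (x ord0)) (phi (\prod_(i < n) iotab (x (lift ord0 i)))),
      phi (\prod_(i < n.+1) iotab (x i)) =
        star_word cop trU [seq iota (x i) | i <- enum 'I_n.+1] &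
      phi (\prod_(i < n.+1) iotab (x i)) =
        \sum_(P : {set {set 'I_n.+1}} | partition P [set: 'I_n.+1])
           X_part tri iota x P].
Proof.
split.
- exact: (phi_step Hcop HtrU Hphi).
- exact: (phi_star Hphi).
- exact: (phi_part Hcop Heps HtrU Hphi).
Qed.
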